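(* Let $A=(a_{ij})\in\mathcal{B}^{m,n}$ and let $k$ be a field. Let $k[A]=k[x_{ij} : a_{ij}=1]$ and let $A[x]$ be the $m\times n$ matrix over $k[A]$ with $A[x]_{ij}=x_{ij}$ if $a_{ij}=1$ and $A[x]_{ij}=0$ if $a_{ij}=0$. Let $I_2(A)\subseteq k[A]$ be the ideal generated by all $2\times 2$ minors of $A[x]$. Then for entries $a_{ij}=a_{k\ell}=1$, the pair $\{a_{ij},a_{k\ell}\}$ is an isolated pair if and only if $x_{ij}x_{k\ell}\in I_2(A)$.
   Context: $\mathcal{B}^{m,n}$ denotes $m\times n$ matrices with entries in the Boolean semiring $\{0,1\}$ with $\vee$ (or), $\wedge$ (and). A pair of entries $\{a_{ij},a_{k\ell}\}$ of $A$ is called isolated if $a_{ij}=a_{k\ell}=1$ and $a_{i\ell}\wedge a_{kj}=0$. *)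

(* Defs.v *)
From HB Require Import structures.
From mathcomp Require Import all_boot all_algebra.
From mathcomp Require Import mpoly.
Set Implicit Arguments. Unset Strict Implicit. Unset Printing Implicit Defensive.
Import GRing.Theory.
Local Open Scope ring_scope.

(* Boolean matrices B^{m,n} are 'M[bool]_(m,n) (true = 1, false = 0). *)

Definition supp m n (A : 'M[bool]_(m, n)) :=
  {p : 'I_m * 'I_n | A p.1 p.2}.

Definition nvars m n (A : 'M[bool]_(m, n)) := #|{: supp A}|.

(* k[A] = k[x_ij : a_ij = 1], realised as a multivariate polynomial ring whose
   variables are indexed by enumerating supp A. *)
Definition kA (k : fieldType) m n (A : 'M[bool]_(m, n)) :=
  {mpoly k[nvars A]}.

(* The variable x_ij (meaningful when a_ij = 1; 0 otherwise). *)
Definition xvar (k : fieldType) m n (A : 'M[bool]_(m, n)) (i : 'I_m) (j : 'I_n)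
  : {mpoly k[nvars A]} :=
  match @insub _ (fun p : 'I_m * 'I_n => A p.1 p.2) (supp A) (i, j) with
  | Some p => 'X_(enum_rank p)
  | None => 0
  end.

Definition Ax (k : fieldType) m n (A : 'M[bool]_(m, n))
  : 'M[{mpoly k[nvars A]}]_(m, n) :=
  \matrix_(i, j) (if A i j then xvar k A i j else 0).

Definition minor2 (k : fieldType) m n (A : 'M[bool]_(m, n))
  (i1 i2 : 'I_m) (j1 j2 : 'I_n) : {mpoly k[nvars A]} :=
  Ax k A i1 j1 * Ax k A i2 j2 - Ax k A i1 j2 * Ax k A i2 j1.

(* Membership in I_2(A): the ideal of k[A] generated by all 2x2 minors
   (rows i1 < i2, columns j1 < j2), i.e. p is a k[A]-linear combination
   of these minors. *)
Definition in_I2 (k : fieldType) m n (A : 'M[bool]_(m, n))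
  (p : {mpoly k[nvars A]}) : Prop :=
  exists c : 'I_m -> 'I_m -> 'I_n -> 'I_n -> {mpoly k[nvars A]},
    p = \sum_(i1 : 'I_m) \sum_(i2 : 'I_m | (i1 < i2)%N)
          \sum_(j1 : 'I_n) \sum_(j2 : 'I_n | (j1 < j2)%N)
            c i1 i2 j1 j2 * minor2 k A i1 i2 j1 j2.

Definition isolated m n (A : 'M[bool]_(m, n)) (i : 'I_m) (j : 'I_n)
  (k : 'I_m) (l : 'I_n) : Prop :=
  A i j /\ A k l /\ (A i l && A k j) = false.

(* Main.v *)
Require Import Defs.
From HB Require Import structures.
From mathcomp Require Import all_boot all_algebra.
From mathcomp Require Import mpoly.
Local Open Scope ring_scope.
Import GRing.Theory.

Section Aux.
Variables (k : fieldType) (m n : nat) (A : 'M[bool]_(m, n)).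
Variables (i i' : 'I_m) (j j' : 'I_n).

Definition rr (a : 'I_m) := (a == i) || (a == i').
Definition cc (b : 'I_n) := (b == j) || (b == j').

Definition vv : 'I_(nvars A) -> k := fun q =>
  let p := @enum_val (supp A) _ q in if rr (val p).1 && cc (val p).2 then 1 else 0.

Lemma eval_Ax a b : meval vv (Ax k A a b) = if A a b && rr a && cc b then 1 else 0.
Proof.
rewrite mxE; case: ifP => Hab /=; last by rewrite meval0.
rewrite /xvar; case: insubP => [p _ hp|]; last by rewrite /= Hab.
by rewrite mevalXU /vv enum_rankK hp.
Qed.

Lemma eval_xvar a b : A a b -> meval vv (xvar k A a b) = if rr a && cc b then 1 else 0.
Proof.
by move=> H; have := eval_Ax a b; rewrite mxE H.
Qed.

Lemma eval_minor (Hij' : A i j') (Hi'j : A i' j) (Hij : A i j) (Hi'j' : A i' j')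
  a b c d : meval vv (minor2 k A a b c d) = 0.
Proof.
have HA : forall x y, rr x -> cc y -> A x y.
  by move=> x y /orP[]/eqP-> /orP[]/eqP->.
rewrite /minor2 mevalB !mevalM !eval_Ax.
case ra: (rr a); case rb: (rr b); case rc: (cc c); case rd: (cc d);
  rewrite /= ?andbF ?andbT ?mulr0 ?mul0r ?subrr //;
  rewrite ?HA ?mulr1 ?subrr //.
Qed.

End Aux.

Lemma collapse (k : fieldType) (m n : nat) (A : 'M[bool]_(m, n))
  (a b : 'I_m) (c d : 'I_n) (s : {mpoly k[nvars A]}) p :
  (a < b)%N -> (c < d)%N -> p = s * minor2 k A a b c d -> @in_I2 k m n A p.
Proof.
move=> ab cd ->.
exists (fun a1 b1 c1 d1 => if [&& a1 == a, b1 == b, c1 == c & d1 == d] then s else 0).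
rewrite (bigD1 a) //= [X in _ + X]big1 ?addr0; last first.
  move=> a1 /negbTE na; apply: big1 => b1 _; apply: big1 => c1 _; apply: big1 => d1 _.
  by rewrite na mul0r.
rewrite (bigD1 b) //= [X in _ + X]big1 ?addr0; last first.
  move=> b1 /andP[_ /negbTE nb]; apply: big1 => c1 _; apply: big1 => d1 _.
  by rewrite eqxx nb mul0r.
rewrite (bigD1 c) //= [X in _ + X]big1 ?addr0; last first.
  move=> c1 /negbTE nc; apply: big1 => d1 _.
  by rewrite !eqxx nc mul0r.
rewrite (bigD1 d) //= [X in _ + X]big1 ?addr0; last first.
  by move=> d1 /andP[_ /negbTE nd]; rewrite !eqxx nd mul0r.
by rewrite !eqxx.
Qed.

Theorem lemma4p12 (k : fieldType) (m n : nat) (A : 'M[bool]_(m, n))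
  (i : 'I_m) (j : 'I_n) (i' : 'I_m) (j' : 'I_n) :
  A i j -> A i' j' ->
  (isolated A i j i' j' <-> @in_I2 k m n A (xvar k A i j * xvar k A i' j')).
Proof.
move=> Hij Hi'j'; split.
  move=> [_ [_ Hiso]].
  have Ax1 : forall a b, A a b -> Ax k A a b = xvar k A a b.
    by move=> a b H; rewrite mxE H.
  have Ax0 : forall a b, A a b = false -> Ax k A a b = 0.
    by move=> a b H; rewrite mxE H.
  have Hz : Ax k A i j' * Ax k A i' j = 0.
    by move: Hiso; case E1: (A i j'); case E2: (A i' j) => //= _;
      rewrite ?(Ax0 _ _ E1) ?(Ax0 _ _ E2) ?mul0r ?mulr0.
  have Hz' : Ax k A i' j * Ax k A i j' = 0 by rewrite mulrC.
  case: (ltngtP i i') => hi.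
  - case: (ltngtP j j') => hj.
    + apply: (@collapse _ _ _ A _ _ _ _ (1) _ hi hj).
      by rewrite mul1r /minor2 Hz subr0 !Ax1.
    + apply: (@collapse _ _ _ A _ _ _ _ (-1) _ hi hj).
      by rewrite /minor2 -(Ax1 _ _ Hij) -(Ax1 _ _ Hi'j') Hz sub0r mulN1r opprK mulrC.
    + by move: Hiso; have E := val_inj hj; subst; rewrite Hi'j' ?Hij.
  - case: (ltngtP j j') => hj.
    + apply: (@collapse _ _ _ A _ _ _ _ (-1) _ hi hj).
      by rewrite /minor2 -(Ax1 _ _ Hij) -(Ax1 _ _ Hi'j') Hz' sub0r mulN1r opprK mulrC.
    + apply: (@collapse _ _ _ A _ _ _ _ (1) _ hi hj).
      by rewrite mul1r /minor2 Hz' subr0 !Ax1 // mulrC.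
    + by move: Hiso; have E := val_inj hj; subst; rewrite Hi'j' ?Hij.
  - by move: Hiso; have E := val_inj hi; subst; rewrite Hi'j' ?Hij.
move=> [c Hc]; split => //; split => //.
case E: (A i j' && A i' j) => //.
move/andP: E => [E1 E2].
have := congr1 (meval (@vv k m n A i i' j j')) Hc.
rewrite mevalM !eval_xvar // /rr /cc !eqxx ?orbT /=.
rewrite raddf_sum big1 /=; first by move/eqP; rewrite ?mulr1 oner_eq0.
move=> a1 _; rewrite raddf_sum big1 // => b1 _.
rewrite raddf_sum big1 // => c1 _; rewrite raddf_sum big1 // => d1 _.
by rewrite /= mevalM eval_minor // mulr0.
Qed.
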